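(* With the mesh, coefficients $a^{(n)}_{n-k}$ and DCC kernels $p^{(n)}_{n-k}$ as in the context (in particular $\tau_{n-1}\le\tau_n$ for $2\le n\le N$), the DCC kernels are positive definite: for every $1\le n\le N$ and every real sequence $w_1,\dots,w_n$, $$\sum_{k=1}^n w_k\sum_{j=1}^k p^{(k)}_{k-j}w_j\ge 0 .$$
   Context: Fix $T>0$, $0<\alpha<1$ and a mesh $0=t_0<t_1<\dots<t_N=T$ with step sizes $\tau_n=t_n-t_{n-1}$ satisfying $\tau_{n-1}\le\tau_n$ for $2\le n\le N$. Set $t_{-1/2}=t_0$, $t_{n-1/2}=t_{n-1}+\tau_n/2$ for $1\le n\le N$, $\tau_{1/2}=\tau_1/2$ and $\tau_{n-1/2}=(\tau_n+\tau_{n-1})/2$ for $n\ge 2$. Let $\omega_\gamma(t)=t^{\gamma-1}/\Gamma(\gamma)$ for $t>0$. For $1\le n\le N$ and $1\le k\le n$ define $$a^{(n)}_{n-k}=\frac{1}{\tau_{k-1/2}}\int_{t_{k-3/2}}^{t_{k-1/2}}\omega_{1-\alpha}(t_{n-1/2}-s)\,ds .$$ The discrete complementary convolution (DCC) kernels are defined by $p^{(n)}_0=1/a^{(n)}_0$ and $p^{(n)}_{n-k}=\frac{1}{a^{(k)}_0}\sum_{j=k+1}^n\big(a^{(j)}_{j-k-1}-a^{(j)}_{j-k}\big)p^{(n)}_{n-j}$ for $1\le k\le n-1$; equivalently $\sum_{j=k}^n p^{(n)}_{n-j}a^{(j)}_{j-k}=1$ for all $1\le k\le n$. *)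

(* Defs.v *)
From HB Require Import structures.
From mathcomp Require Import all_boot all_order all_algebra.
From mathcomp Require Import all_classical all_reals all_analysis.
Set Implicit Arguments. Unset Strict Implicit. Unset Printing Implicit Defensive.
Import Order.TTheory GRing.Theory Num.Theory.
Local Open Scope classical_set_scope.
Local Open Scope ring_scope.

Section DCC.
Variable R : realType.

Definition Gamma (x : R) : R :=
  Rintegral (@lebesgue_measure R) `]0, +oo[%classic
    (fun s : R => s `^ (x - 1) * expR (- s)).

(* omega_gamma(t) = t^(gamma-1)/Gamma(gamma) for t > 0 (set to 0 for t <= 0,
   which only matters on a null set). *)
Definition omega (g t : R) : R :=
  if 0 < t then t `^ (g - 1) / Gamma g else 0.

Variable t : nat -> R.

Definition tau (n : nat) : R := t n - t n.-1.

(* tmid n = t_{n-1/2}; tmid 0 = t_{-1/2} = t_0 *)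
Definition tmid (n : nat) : R :=
  if n is n'.+1 then t n' + tau n / 2 else t 0.

Definition tauh (n : nat) : R :=
  if n == 1%N then tau 1 / 2 else (tau n + tau n.-1) / 2.

Variable alpha : R.

(* acoef n k = a^{(n)}_{n-k} *)
Definition acoef (n k : nat) : R :=
  (tauh k)^-1 *
  Rintegral (@lebesgue_measure R) `[tmid k.-1, tmid k]%classic
    (fun s : R => omega (1 - alpha) (tmid n - s)).

(* ptab n d i = p^{(n)}_i for i <= d, computed by the recursion
   p^{(n)}_0 = 1/a^{(n)}_0,
   p^{(n)}_{n-k} = 1/a^{(k)}_0 * sum_{j=k+1}^n (a^{(j)}_{j-k-1} - a^{(j)}_{j-k}) p^{(n)}_{n-j}. *)
Fixpoint ptab (n d : nat) : nat -> R :=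
  match d with
  | 0 => fun _ => (acoef n n)^-1
  | d'.+1 =>
      let f := ptab n d' in
      let k := (n - d'.+1)%N in
      fun i => if (i <= d')%N then f i else
        (acoef k k)^-1 *
        \sum_(k.+1 <= j < n.+1) (acoef j k.+1 - acoef j k) * f (n - j)%N
  end.

(* pker n i = p^{(n)}_i ; so p^{(n)}_{n-k} = pker n (n - k) *)
Definition pker (n i : nat) : R := ptab n i i.

End DCC.

(* Main.v *)
Require Import Defs.
From HB Require Import structures.
From mathcomp Require Import all_boot all_order all_algebra.
From mathcomp Require Import all_classical all_reals all_analysis.
From mathcomp Require Import ring lra measurable_realfun.
Import Order.TTheory GRing.Theory Num.Theory.
Local Open Scope ring_scope.
Import numFieldNormedType.Exports.
Lemma quad_bound (R : realType) (M ui uj : R) : M <= 0 -> M * (ui^+2 + uj^+2)/2 <= ui * M * uj.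
Proof.
move=> hM. have : 0 <= (-M) * (ui - uj)^+2 by rewrite mulr_ge0 ?sqr_ge0 ?oppr_ge0.
move=> h. rewrite -subr_ge0. suff -> : ui * M * uj - M * (ui ^+ 2 + uj ^+ 2) / 2 = (-M) * (ui - uj)^+2 / 2.
  by rewrite divr_ge0.
by field.
Qed.

Lemma gersh (R : realType) (M : nat -> nat -> R) (u : nat -> R) (n : nat) :
 (forall i j, (1 <= i <= n)%N -> (1 <= j <= n)%N -> i != j -> M i j <= 0) ->
 (forall i, (1 <= i <= n)%N -> 0 <= \sum_(1 <= j < n.+1) M i j + \sum_(1 <= j < n.+1) M j i) ->
 0 <= \sum_(1 <= i < n.+1) \sum_(1 <= j < n.+1) u i * M i j * u j.
Proof.
move=> Hoff Hrc.
apply: (@le_trans _ _ (\sum_(1 <= i < n.+1) \sum_(1 <= j < n.+1) M i j * (u i ^+ 2 + u j ^+ 2) / 2)); last first.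
  apply: ler_sum_nat => i /andP[i1 iN]; apply: ler_sum_nat => j /andP[j1 jN].
  have [->|ij] := eqVneq i j.
    by rewrite le_eqVlt; apply/orP; left; apply/eqP; field.
  by apply: quad_bound; apply: Hoff => //; apply/andP; split.
have -> : \sum_(1 <= i < n.+1) \sum_(1 <= j < n.+1) M i j * (u i ^+ 2 + u j ^+ 2) / 2 =
   \sum_(1 <= i < n.+1) (u i ^+ 2 / 2) * (\sum_(1 <= j < n.+1) M i j + \sum_(1 <= j < n.+1) M j i).
  transitivity (\sum_(1 <= i < n.+1) \sum_(1 <= j < n.+1) (M i j * (u i ^+ 2 / 2)) +
                \sum_(1 <= i < n.+1) \sum_(1 <= j < n.+1) (M i j * (u j ^+ 2 / 2))).
    rewrite -big_split /=; apply: eq_bigr => i _; rewrite -big_split /=; apply: eq_bigr => j _.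
    by field.
  rewrite [X in _ + X]exchange_big /= -big_split /=; apply: eq_bigr => i _.
  by rewrite mulrDr !mulr_sumr; congr (_ + _); apply: eq_bigr => j _; rewrite mulrC.
rewrite big_nat_cond; apply: sumr_ge0 => i /andP[/andP[i1 iN] _].
by apply: mulr_ge0; [rewrite divr_ge0 ?sqr_ge0 | apply: Hrc; rewrite i1 -ltnS].
Qed.

Section AlgCore.
Variable R : realType.
Variables (a pk : nat -> nat -> R) (n : nat).
Hypothesis Hpk0 : forall k, (1 <= k <= n)%N -> pk k 0 * a k k = 1.
Hypothesis HpkS : forall k m, (1 <= m)%N -> (m < k <= n)%N ->
  a m m * pk k (k - m) = \sum_(m.+1 <= j < k.+1) (a j m.+1 - a j m) * pk k (k - j).
Hypothesis Hb : forall k j, (1 <= j)%N -> (j < k <= n)%N -> a k j <= a k j.+1.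
Hypothesis Hc : forall m k, (1 <= k)%N -> (k < m <= n)%N -> a m k.+1 <= a m.-1 k.
Hypothesis Hpos : forall m k, (1 <= k <= m)%N -> (m <= n)%N -> 0 <= a m k.

Let P k j := if (j <= k)%N then pk k (k - j) else 0.
Let B j m := if (m <= j)%N then a j m - (if (m < j)%N then a j m.+1 else 0) else 0.

Lemma PB k m : (1 <= k <= n)%N -> (1 <= m <= n)%N ->
  \sum_(1 <= j < n.+1) P k j * B j m = (k == m)%:R.
Proof.
move=> /andP[k1 kn] /andP[m1 mn].
have [km|mk] := ltnP k m.
  rewrite (ltn_eqF km) big1_seq // => j _; rewrite /P /B.
  case: ifP => jk; last by rewrite mul0r.
  by rewrite (ltn_geF (leq_ltn_trans jk km)) mulr0.
rewrite (big_cat_nat _ (n := m)) //=; last exact: leqW.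
rewrite [X in X + _]big1_seq ?add0r; last first.
  move=> j; rewrite mem_index_iota => /andP[_ /andP[_ jm]].
  by rewrite /B (ltn_geF jm) mulr0.
rewrite (big_cat_nat _ (n := k.+1)) //=; try (by apply: leqW); try (by rewrite ltnS).
rewrite [X in _ + X]big1_seq ?addr0; last first.
  move=> j; rewrite mem_index_iota => /andP[_ /andP[kj _]].
  by rewrite /P (ltn_geF kj) mul0r.
rewrite big_ltn // /P /B leqnn ltnn subr0 mk.
move: mk; rewrite leq_eqVlt => /orP[/eqP mk|mk].
  by rewrite mk eqxx big_geq // subnn addr0 Hpk0 // k1.
rewrite (gtn_eqF mk) mulrC HpkS //; last by rewrite mk.
rewrite -big_split /= big1_seq // => j; rewrite mem_index_iota => /andP[_ /andP[mj jk]].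
rewrite -ltnS jk (ltnW mj) mj; ring.
Qed.

Variable w : nat -> R.

Lemma alg_main : 0 <= \sum_(1 <= k < n.+1) w k * \sum_(1 <= j < k.+1) pk k (k - j)%N * w j.
Proof.
pose u j := \sum_(1 <= k < n.+1) w k * P k j.
have eQ : \sum_(1 <= k < n.+1) w k * \sum_(1 <= j < k.+1) pk k (k - j)%N * w j =
    \sum_(1 <= k < n.+1) \sum_(1 <= j < n.+1) w k * P k j * w j.
  apply: eq_big_nat => k /andP[k1 kn].
  rewrite mulr_sumr [RHS](big_cat_nat _ (n := k.+1)) //=; try (by rewrite ltnS); try (by apply: leqW).
  rewrite [X in _ = _ + X]big1_seq ?addr0.
    by apply: eq_big_nat => j /andP[_ jk]; rewrite /P -ltnS jk mulrA.
  move=> j; rewrite mem_index_iota => /andP[_ /andP[kj _]].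
  by rewrite /P (ltn_geF kj) mulr0 mul0r.
have uB m : (1 <= m <= n)%N -> \sum_(1 <= i < n.+1) u i * B i m = w m.
  move=> hm.
  transitivity (\sum_(1 <= k < n.+1) w k * (k == m)%:R).
    rewrite /u.
    under eq_bigr do rewrite mulr_suml.
    rewrite exchange_big /=; apply: eq_big_nat => k hk.
    by rewrite -(PB k m hk hm) mulr_sumr; apply: eq_bigr => i _; rewrite mulrA.
  rewrite (bigD1_seq m) ?mem_index_iota ?iota_uniq //= eqxx mulr1 big1 ?addr0 //.
  by move=> k /negPf ->; rewrite mulr0.
rewrite eQ.
have -> : \sum_(1 <= k < n.+1) \sum_(1 <= j < n.+1) w k * P k j * w j =
     \sum_(1 <= i < n.+1) \sum_(1 <= m < n.+1) u i * B i m * u m.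
  rewrite exchange_big /=.
  transitivity (\sum_(1 <= m < n.+1) w m * u m).
    rewrite /u; apply: eq_bigr => m _.
    rewrite mulr_sumr; apply: eq_bigr => k _.
    by rewrite mulrC mulrA.
  rewrite [RHS]exchange_big /=.
  apply: eq_big_nat => m hm; rewrite -(uB m hm) mulr_suml.
  by apply: eq_bigr.
apply: gersh.
  move=> i j /andP[i1 iN] /andP[j1 jN] ij; rewrite /B.
  case: ifP => ji; last by [].
  have jlti : (j < i)%N by rewrite ltn_neqAle ji eq_sym ij.
  by rewrite jlti subr_le0; apply: Hb => //; rewrite jlti.
move=> i /andP[i1 iN].
have row : \sum_(1 <= j < n.+1) B i j = a i 1.
  rewrite (big_cat_nat _ (n := i.+1)) //= [X in _ + X]big1_seq ?addr0; last first.
    move=> j; rewrite mem_index_iota => /andP[_ /andP[ij _]].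
    by rewrite /B (ltn_geF ij).
  rewrite big_nat_recr //= /B leqnn ltnn subr0.
  rewrite (eq_big_nat _ _ (F2 := fun j => - (a i j.+1 - a i j))); last first.
    by move=> j /andP[_ ji]; rewrite (ltnW ji) ji opprB.
  rewrite sumrN telescope_sumr //; ring.
have col : a n i <= \sum_(1 <= j < n.+1) B j i.
  rewrite (big_cat_nat _ (n := i)) //=; last exact: leqW.
  rewrite [X in _ <= X + _]big1_seq ?add0r; last first.
    move=> j; rewrite mem_index_iota => /andP[_ /andP[_ ji]].
    by rewrite /B (ltn_geF ji).
  rewrite big_ltn ?ltnS // /B leqnn ltnn subr0.
  apply: (@le_trans _ _ (a i i + \sum_(i.+1 <= j < n.+1) (a j i - a j.-1 i))).
    rewrite big_add1 /= telescope_sumr //; lra.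
  rewrite lerD2l; apply: ler_sum_nat => j /andP[ij jn].
  rewrite (ltnW ij) ij lerD2l lerN2; apply: Hc => //.
  by rewrite ij -ltnS.
rewrite row; apply: addr_ge0; first by apply: Hpos; rewrite ?i1.
by apply: le_trans col; apply: Hpos; rewrite ?i1 ?leqnn.
Qed.
End AlgCore.

Section PK.
Variables (R : realType) (t : nat -> R) (alpha : R).
Local Notation a := (acoef t alpha).

Lemma ptab_stable n d i : (i <= d)%N -> ptab t alpha n d i = pker t alpha n i.
Proof.
rewrite /pker; elim: d => [|d IH]; first by rewrite leqn0 => /eqP ->.
rewrite leq_eqVlt => /orP[/eqP ->|id]; first by [].
by rewrite /= -ltnS id IH.
Qed.

Lemma pker0 n : pker t alpha n 0 = (a n n)^-1.
Proof. by []. Qed.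

Lemma pkerS k m : (m < k)%N ->
  pker t alpha k (k - m) =
  (a m m)^-1 * \sum_(m.+1 <= j < k.+1) (a j m.+1 - a j m) * pker t alpha k (k - j).
Proof.
move=> mk.
have -> : (k - m = (k - m.+1).+1)%N by rewrite subnSK.
rewrite {1}/pker /= ltnn subnSK // subKn ?(ltnW mk) //.
congr (_ * _); apply: eq_big_nat => j /andP[mj jk].
rewrite ptab_stable //.
by rewrite leq_sub2l.
Qed.
End PK.

Local Open Scope classical_set_scope.
Section An.
Variable R : realType.

Lemma harm_right : (@harmonic R) @ \oo --> (0:R)^'+.
Proof.
move=> A HA.
have H : \forall n \near \oo, (0 < harmonic n -> A (harmonic n)) := cvg_harmonic HA.
exact: (filterS (fun n h => h (harmonic_gt0 n)) H).
Qed.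

Lemma der_pow (c e s : R) : s < c ->
  is_derive s 1 (fun s => (c - s) `^ e) (e * (c - s) `^ (e - 1) * -1).
Proof.
move=> sc.
have h1 : is_derive s 1 (fun s : R => c - s) (-1).
  have H := @is_deriveB _ _ _ (cst c) id s 1 0 1 _ _.
  rewrite sub0r in H; exact: H.
have h2 : is_derive ((fun s : R => c - s) s) 1 (fun x : R => x `^ e) (e * (c - s) `^ (e - 1)).
  by apply: is_derive1_powR; rewrite subr_gt0.
exact (is_derive1_comp (f := fun x : R => x `^ e) (g := fun s : R => c - s) h2 h1).
Qed.

Section Int.
Variables (g Gm c : R).
Hypothesis g0 : 0 < g.
Let mu := @lebesgue_measure R.
Definition f0 (s : R) : R := Gm^-1 * (c - s) `^ (g - 1).
Definition FF (s : R) : R := - (g * Gm)^-1 * (c - s) `^ g.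

Lemma df0 s : s < c -> derivable f0 s 1.
Proof.
move=> sc; have H := is_deriveZ (Gm^-1) (der_pow c (g - 1) s sc).
by case: H.
Qed.

Lemma dFF s : s < c -> is_derive s 1 FF (f0 s).
Proof.
move=> sc; have H := is_deriveZ (- (g * Gm)^-1) (der_pow c g s sc).
suff -> : f0 s = - (g * Gm)^-1 *: (g * (c - s) `^ (g - 1) * -1) by exact H.
rewrite /f0 invfM /GRing.scale /=.
have gn : g != 0 by rewrite gt_eqF.
rewrite [RHS](_ : _ = (g^-1 * g) * (Gm^-1 * (c - s) `^ (g - 1))); first by rewrite mulVf // mul1r.
by ring.
Qed.

Lemma FF_cont s : s < c -> FF x @[x --> s] --> FF s.
Proof.
move=> sc; apply: differentiable_continuous; apply/derivable1_diffP.
by case: (dFF s sc).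
Qed.

Lemma int_reg p q : p < q -> q < c ->
  (\int[mu]_(x in `[p, q]) (f0 x)%:E = (FF q - FF p)%:E)%E.
Proof.
move=> pq qc.
apply: continuous_FTC2 => //.
- apply: derivable_within_continuous => x; rewrite in_itv /= => /andP[_ xq].
  by apply: df0; apply: le_lt_trans qc.
- split.
  + move=> x; rewrite in_itv /= => /andP[_ xq].
    by case: (dFF x (lt_trans xq qc)).
  + by apply: cvg_at_right_filter; apply: FF_cont; apply: lt_trans qc.
  + by apply: cvg_at_left_filter; apply: FF_cont.
- move=> x; rewrite in_itv /= => /andP[_ xq].
  by rewrite derive1E; case: (dFF x (lt_trans xq qc)).
Qed.

Hypothesis Gm0 : 0 <= Gm.

Lemma f0_ge0 s : 0 <= f0 s.
Proof. by rewrite /f0 mulr_ge0 ?invr_ge0 ?powR_ge0. Qed.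

Lemma mf0 (D : set R) : measurable_fun D f0.
Proof.
apply: measurable_funTS.
rewrite (_ : f0 = cst (Gm^-1) \* ((fun x : R => x `^ (g - 1)) \o (fun s : R => c - s))) //.
apply: measurable_funM; first exact: measurable_cst.
have h1 : measurable_fun setT (fun s : R => c - s).
  rewrite (_ : (fun s : R => c - s) = cst c \- id) //.
  by apply: measurable_funB; [exact: measurable_cst | exact: measurable_id].
apply: measurableT_comp h1. exact: measurable_powR.
Qed.

Lemma int_sing p : p < c ->
  (\int[mu]_(x in `[p, c]) (f0 x)%:E = (FF c - FF p)%:E)%E.
Proof.
move=> pc.
pose e i := c - (c - p) * harmonic i.
pose S i := `[p, e i].
have cp0 : 0 < c - p by rewrite subr_gt0.
have he i : harmonic i <= 1 :> R.
  by rewrite /= invf_le1 ?ler1n // ltr0n.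
have ep i : p <= e i.
  rewrite /e lerBrDr -lerBrDl; rewrite -{2}[c - p]mulr1.
  by rewrite ler_pM2l.
have ec i : e i < c.
  by rewrite /e ltrBlDr ltrDl mulr_gt0 // harmonic_gt0.
have hS : \bigcup_i S i = `[p, c[.
  apply/seteqP; split.
    move=> x [i _]; rewrite /S /= !in_itv /= => /andP[px xe].
    by rewrite px (le_lt_trans xe (ec i)).
  move=> x; rewrite /= in_itv /= => /andP[px xc].
  have xc0 : 0 < c - x by rewrite subr_gt0.
  exists (Num.bound ((c - p) / (c - x)))%N => //.
  rewrite /S /= in_itv /= px /e lerBrDr -lerBrDl /=.
  rewrite ler_pdivrMr ?ltr0n //.
  have hb : (c - p) / (c - x) <= (Num.bound ((c - p) / (c - x))).+1%:R.
    by rewrite (le_trans (ltW (archi_boundP _))) ?ler_nat // divr_ge0 // ltW.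
  rewrite -{1}[c - p](@divfK _ (c - x)) ?gt_eqF // [X in X <= _]mulrC.
  by rewrite ler_pM2l.
have nd : nondecreasing_seq S.
  move=> n m nm; rewrite subsetEset; apply: subset_itvl; rewrite bnd_simp.
  by rewrite /e lerD2l lerN2 ler_pM2l //= lef_pV2 ?posrE ?ltr0n // ler_nat.
have mS i : measurable (S i) by exact: measurable_itv.
have mf i : measurable_fun (S i) (EFin \o f0) by apply/measurable_EFinP; exact: mf0.
have fge0 : forall i x, S i x -> (0 <= (EFin \o f0) x)%E.
  by move=> i x _; rewrite /= lee_fin f0_ge0.
have lim1 := @ge0_nondecreasing_set_cvg_integral _ (measurableTypeR R) R S (EFin \o f0) lebesgue_measure nd mS mf fge0.
have eqS i : (\int[mu]_(x in S i) (EFin \o f0) x = (FF (e i) - FF p)%:E)%E.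
  case: i => [|i].
    rewrite /S (_ : e 0%N = p) ?set_itv1 ?integral_set1 ?subrr //.
    by rewrite /e /= invr1 mulr1 opprB addrC subrK.
  apply: int_reg; last exact: ec.
  rewrite /e ltrBrDl -ltrBrDr -{2}[c - p]mulr1 ltr_pM2l //=.
  by rewrite invf_lt1 ?ltr0n // ltr1n.
have lim2 : (fun i => (FF (e i) - FF p)%:E) @ \oo --> (FF c - FF p)%:E.
  apply: cvg_EFin; first exact: nearW.
  apply: cvgB; last exact: cvg_cst.
  have -> : (fun i => FF (e i)) = (fun i => - (g * Gm)^-1 * ((c - p) `^ g * harmonic i `^ g)).
    apply/funext => i; rewrite /FF /e.
    rewrite (_ : c - (c - (c - p) * harmonic i) = (c - p) * harmonic i); last by ring.
    by rewrite powRM // ?harmonic_ge0 // ltW.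
  have -> : FF c = - (g * Gm)^-1 * ((c - p) `^ g * 0).
    by rewrite /FF subrr powR0 ?mulr0 // gt_eqF.
  apply: cvgMl_tmp; apply: cvgMl_tmp.
  exact: (cvg_comp _ _ harm_right (powR_cvg0 g0)).
have lim3 : (fun i => \int[lebesgue_measure]_(x in S i) (EFin \o f0) x)%E @ \oo --> (FF c - FF p)%:E.
  by rewrite (funext eqS).
rewrite -integral_itv_bndo_bndc; last by apply/measurable_EFinP; exact: mf0.
rewrite -hS.
exact: (cvg_unique _ lim1 lim3).
Qed.
End Int.
End An.

Section Conc.
Variables (R : realType) (g : R).
Hypothesis g0 : 0 < g.
Hypothesis g1 : g < 1.
Definition Sl (u v : R) := (v `^ g - u `^ g) / (v - u).

Lemma mvt_pow x y : 0 < x -> x < y ->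
  exists2 z, x < z < y & y `^ g - x `^ g = g * z `^ (g - 1) * (y - x).
Proof.
move=> x0 xy.
have := @MVT R (fun s => s `^ g) (fun s => g * s `^ (g - 1)) x y xy.
case.
- move=> s; rewrite in_itv /= => /andP[xs _]; apply: is_derive1_powR.
  exact: lt_trans xs.
- apply: derivable_within_continuous => s; rewrite in_itv /= => /andP[xs _].
  have := @is_derive1_powR R g s (lt_le_trans x0 xs); by case.
- by move=> z; rewrite in_itv /= => hz ->; exists z.
Qed.

Lemma pow_anti z w : 0 < z -> z <= w -> w `^ (g - 1) <= z `^ (g - 1).
Proof.
move=> z0 zw.
have -> : g - 1 = - (1 - g) by ring.
rewrite !powRN lef_pV2 ?posrE ?powR_gt0 //; last exact: lt_le_trans zw.
by apply: ge0_ler_powR => //; rewrite ?subr_ge0 ?ltW // nnegrE ltW // (lt_le_trans z0).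
Qed.

Lemma chord3 x y z : 0 <= x -> x < y -> y < z -> Sl y z <= Sl x y.
Proof.
move=> x0 xy yz.
have y0 : 0 < y by apply: le_lt_trans xy.
have [z2 /andP[yz2 z2z] e2] := mvt_pow _ _ y0 yz.
have zy0 : z - y != 0 by rewrite subr_eq0 gt_eqF.
have yx0 : y - x != 0 by rewrite subr_eq0 gt_eqF.
have -> : Sl y z = g * z2 `^ (g - 1) by rewrite /Sl e2 mulfK.
have hz2 : z2 `^ (g - 1) <= y `^ (g - 1) by apply: pow_anti => //; exact: ltW.
move: x0; rewrite le_eqVlt => /orP[/eqP x0|x0].
  rewrite /Sl -x0 powR0 ?gt_eqF // subr0 subr0.
  rewrite -[in X in _ <= X / _](mulr_powRB1 (ltW y0) g0) (mulrC y) mulfK ?gt_eqF //.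
  apply: (@le_trans _ _ (g * y `^ (g - 1))); first by rewrite ler_pM2l.
  by rewrite -{2}[y `^ (g - 1)]mul1r ler_pM2r ?powR_gt0 ?ltW.
have [z1 /andP[xz1 z1y] e1] := mvt_pow _ _ x0 xy.
have -> : Sl x y = g * z1 `^ (g - 1) by rewrite /Sl e1 mulfK.
rewrite ler_pM2l //; apply: pow_anti; first exact: lt_trans xz1.
exact: ltW (lt_trans z1y yz2).
Qed.

Lemma Sl_y x y y' : 0 <= x -> x < y -> y < y' -> Sl x y' <= Sl x y.
Proof.
move=> x0 xy yy.
have h := chord3 _ _ _ x0 xy yy.
move: h; rewrite /Sl.
set u := (y `^ g - x `^ g) / (y - x); set v := (y' `^ g - y `^ g) / (y' - y).
move=> vu.
have eu : y `^ g - x `^ g = u * (y - x) by rewrite /u divfK // subr_eq0 gt_eqF.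
have ev : y' `^ g - y `^ g = v * (y' - y) by rewrite /v divfK // subr_eq0 gt_eqF.
have xy' : 0 < y' - x by rewrite subr_gt0 (lt_trans xy yy).
rewrite ler_pdivrMr //.
have -> : y' `^ g - x `^ g = v * (y' - y) + u * (y - x).
  by rewrite -ev -eu; ring.
have : 0 <= (u - v) * (y' - y) by rewrite mulr_ge0 // subr_ge0 // ltW.
move=> h; rewrite -subr_ge0; apply: le_trans h _; rewrite le_eqVlt; apply/orP; left; apply/eqP; ring.
Qed.

Lemma Sl_x x x' y : 0 <= x -> x < x' -> x' < y -> Sl x' y <= Sl x y.
Proof.
move=> x0 xx x'y.
have h := chord3 _ _ _ x0 xx x'y.
move: h; rewrite /Sl.
set u := (x' `^ g - x `^ g) / (x' - x); set v := (y `^ g - x' `^ g) / (y - x').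
move=> vu.
have eu : x' `^ g - x `^ g = u * (x' - x) by rewrite /u divfK // subr_eq0 gt_eqF.
have ev : y `^ g - x' `^ g = v * (y - x') by rewrite /v divfK // subr_eq0 gt_eqF.
have xy : 0 < y - x by rewrite subr_gt0 (lt_trans xx x'y).
rewrite ler_pdivlMr //.
have -> : y `^ g - x `^ g = v * (y - x') + u * (x' - x).
  by rewrite -ev -eu; ring.
have : 0 <= (u - v) * (x' - x) by rewrite mulr_ge0 // subr_ge0 // ltW.
move=> h; rewrite -subr_ge0; apply: le_trans h _; rewrite le_eqVlt; apply/orP; left; apply/eqP; ring.
Qed.

Lemma Sl_mono x1 y1 x2 y2 : 0 <= x1 -> x1 < y1 -> x1 <= x2 -> y1 <= y2 -> x2 < y2 ->
  Sl x2 y2 <= Sl x1 y1.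
Proof.
move=> x10 xy1 x12 y12 xy2.
apply: (@le_trans _ _ (Sl x1 y2)).
  move: x12; rewrite le_eqVlt => /orP[/eqP ->|x12] //.
  exact: Sl_x.
move: y12; rewrite le_eqVlt => /orP[/eqP ->|y12] //.
exact: Sl_y.
Qed.

Lemma Sl_ge0 x y : 0 <= x -> x < y -> 0 <= Sl x y.
Proof.
move=> x0 xy; rewrite /Sl; apply: divr_ge0; last by rewrite subr_ge0 ltW.
rewrite subr_ge0; apply: ge0_ler_powR.
- exact: ltW.
- by rewrite nnegrE.
- by rewrite nnegrE (le_trans x0 (ltW xy)).
- exact: ltW.
Qed.

Lemma Sl_gt0 y : 0 < y -> 0 < Sl 0 y.
Proof.
move=> y0; rewrite /Sl powR0 ?gt_eqF // !subr0 divr_gt0 // powR_gt0 //.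
Qed.
End Conc.


Section Glue.
Variables (R : realType) (alpha : R) (N : nat) (t : nat -> R).
Hypothesis ha : 0 < alpha < 1.
Hypothesis ht : forall n : nat, (1 <= n <= N)%N -> t n.-1 < t n.
Hypothesis htau : forall n : nat, (2 <= n <= N)%N -> tau t n.-1 <= tau t n.

Let c := tmid t.
Let hm k := c k - c k.-1.

Lemma hm_tauh k : (1 <= k)%N -> hm k = tauh t k.
Proof.
case: k => [|[|k]] //= _.
  by rewrite /hm /c /tmid /tauh /= /tau /=; field.
by rewrite /hm /c /tmid /tauh /= /tau /=; field.
Qed.

Lemma tau_gt0 k : (1 <= k <= N)%N -> 0 < tau t k.
Proof. by move=> hk; rewrite /tau subr_gt0; apply: ht. Qed.

Lemma hm_gt0 k : (1 <= k <= N)%N -> 0 < hm k.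
Proof.
move=> /andP[k1 kN]; rewrite hm_tauh //.
case: k k1 kN => [|[|k]] // _ kN.
  by rewrite /tauh /= divr_gt0 // tau_gt0.
rewrite /tauh /= divr_gt0 // addr_gt0 // tau_gt0 //.
by rewrite /= (leq_trans (leqnSn _) kN).
Qed.

Lemma c_le j k : (j <= k <= N)%N -> c j <= c k.
Proof.
elim: k => [|k IH]; first by rewrite leqn0 => /andP[/eqP ->].
move=> /andP[jk kN]; move: jk; rewrite leq_eqVlt => /orP[/eqP ->|jk] //.
apply: (le_trans (IH _)); first by rewrite -ltnS jk (ltnW kN).
have := hm_gt0 k.+1; rewrite /hm /= subr_gt0 => h.
by apply: ltW; apply: h; rewrite kN.
Qed.

Lemma c_lt j k : (j < k <= N)%N -> c j < c k.
Proof.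
case: k => [|k] //= /andP[jk kN].
apply: (le_lt_trans (c_le j k _)); first by rewrite -ltnS jk (ltnW kN).
have := hm_gt0 k.+1; rewrite /hm /= subr_gt0 => h.
by apply: h; rewrite kN.
Qed.

Lemma hm_step k : (1 <= k)%N -> (k.+1 <= N)%N -> hm k <= hm k.+1.
Proof.
move=> k1 kN; rewrite !hm_tauh //.
case: k k1 kN => [|[|k]] // _ kN.
  rewrite /tauh /= ler_pM2r // lerDr; apply: ltW; apply: tau_gt0; by rewrite kN.
rewrite /tauh /= ler_pM2r //.
have h1 := htau k.+2; have h2 := htau k.+3.
rewrite /= in h1 h2.
apply: lerD; [apply: h2 | apply: h1]; first by rewrite kN.
by rewrite (leq_trans (leqnSn _) kN).
Qed.

Lemma hm_mono k m : (1 <= k <= m)%N -> (m <= N)%N -> hm k <= hm m.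
Proof.
elim: m => [|m IH]; first by case/andP => k1 /(leq_trans k1).
move=> /andP[k1 km] mN; move: km; rewrite leq_eqVlt => /orP[/eqP ->|km] //.
apply: (le_trans (IH _ _)); first by rewrite k1.
  exact: ltnW.
apply: hm_step => //; exact: leq_trans k1 km.
Qed.

Let g := 1 - alpha.
Let Gm := Gamma g.

Lemma g0 : 0 < g. Proof. by rewrite /g subr_gt0; case/andP: ha. Qed.
Lemma g1 : g < 1. Proof. by rewrite /g ltrBlDr ltrDl; case/andP: ha. Qed.

Lemma Gm_ge0 : 0 <= Gm.
Proof.
rewrite /Gm /Gamma; apply: Rintegral_ge0 => x _.
by rewrite mulr_ge0 ?powR_ge0 ?expR_ge0.
Qed.

Lemma Rint_omega p q c0 : p < q -> q <= c0 ->
  Rintegral (@lebesgue_measure R) `[p, q]%classic (fun s => omega g (c0 - s)) =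
  FF R g Gm c0 q - FF R g Gm c0 p.
Proof.
move=> pq qc.
rewrite /Rintegral.
rewrite (_ : (\int[lebesgue_measure]_(x in `[p, q]) (omega g (c0 - x))%:E =
    \int[lebesgue_measure]_(x in `[p, q]) (f0 R g Gm c0 x)%:E)%E); last first.
  apply: eq_integral => s; rewrite inE /= in_itv /= => /andP[_ sq]; congr EFin.
  rewrite /omega /f0; case: ifP => [_|]; first by rewrite mulrC.
  move/negbT; rewrite -leNgt subr_le0 => cs.
  have -> : s = c0 by apply/le_anti; rewrite cs (le_trans sq qc).
  rewrite subrr powR0 ?mulr0 //.
  by rewrite /g addrAC subrr add0r oppr_eq0 gt_eqF //; case/andP: ha.
move: qc; rewrite le_eqVlt => /orP[/eqP qc0|qc].
  by rewrite -qc0 int_sing //; [exact: g0 | exact: Gm_ge0].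
by rewrite int_reg //; exact: g0.
Qed.

Lemma acoef_closed n k : (1 <= k <= n)%N -> (n <= N)%N ->
  acoef t alpha n k = (g * Gm)^-1 * Sl R g (c n - c k) (c n - c k.-1).
Proof.
move=> /andP[k1 kn] nN.
have ck : c k.-1 < c k by apply: c_lt; rewrite prednK // leqnn (leq_trans kn nN).
rewrite /acoef Rint_omega //; last by apply: c_le; rewrite kn.
rewrite -hm_tauh // /hm /Sl /FF.
have -> : c n - c k.-1 - (c n - c k) = c k - c k.-1 by ring.
rewrite -/c; ring.
Qed.

Lemma main_pos n (w : nat -> R) : (1 <= n <= N)%N ->
  0 <= \sum_(1 <= k < n.+1) w k * \sum_(1 <= j < k.+1) pker t alpha k (k - j)%N * w j.
Proof.
move=> /andP[n1 nN].
have cl m k : (1 <= k <= m)%N -> (m <= n)%N ->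
    acoef t alpha m k = (g * Gm)^-1 * Sl R g (c m - c k) (c m - c k.-1).
  by move=> hk hm0; apply: acoef_closed => //; exact: leq_trans hm0 nN.
have := Gm_ge0; rewrite le_eqVlt => /orP[/eqP G0|Gpos].
  rewrite big1_seq //= => k /=; rewrite mem_index_iota => /andP[k1 kn1].
  rewrite big1_seq ?mulr0 // => j /=; rewrite mem_index_iota => /andP[j1 jk1].
  have a0 m : (1 <= m <= k)%N -> acoef t alpha m m = 0.
    move=> /andP[m1 mk]; rewrite cl ?m1 ?leqnn //; last by rewrite (leq_trans mk).
    by rewrite -G0 mulr0 invr0 mul0r.
  move: jk1; rewrite ltnS leq_eqVlt => /orP[/eqP ->|jk].
    by rewrite subnn pker0 a0 ?invr0 ?mul0r // k1 leqnn.
  by rewrite pkerS // a0 ?invr0 ?mul0r // j1 ltnW.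
have kap : 0 < (g * Gm)^-1 by rewrite invr_gt0 mulr_gt0 // g0.
have akk k : (1 <= k <= n)%N -> acoef t alpha k k != 0.
  move=> /andP[k1 kn]; rewrite cl ?k1 ?leqnn // subrr mulf_neq0 ?gt_eqF //.
  rewrite Sl_gt0 //; first exact: g0.
  rewrite subr_gt0; apply: c_lt; rewrite prednK // leqnn; exact: leq_trans kn nN.
apply: (@alg_main R (acoef t alpha) (pker t alpha) n).
- by move=> k hk; rewrite pker0 mulVf // akk.
- move=> k m m1 /andP[mk kn].
  by rewrite pkerS // mulrA mulfV ?mul1r // akk // m1 (ltnW (leq_trans mk kn)).
- move=> k j j1 /andP[jk kn].
  have kN : (k <= N)%N := leq_trans kn nN.
  rewrite !cl ?j1 ?(ltnW jk) // (_ : j.+1.-1 = j) // ler_pM2l //.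
  have h1 : c j.+1 <= c k by apply: c_le; rewrite jk.
  have h2 : c j < c j.+1 by apply: c_lt; rewrite leqnn (leq_trans jk kN).
  have h3 : c j.-1 < c j by apply: c_lt; rewrite prednK // leqnn (leq_trans (ltnW jk) kN).
  apply: (@Sl_mono R g g0 g1); lra.
- move=> m k k1 /andP[km mn].
  have mN : (m <= N)%N := leq_trans mn nN.
  have m1 : (1 <= m.-1)%N by rewrite -ltnS prednK // (leq_trans _ km).
  have km1 : (k <= m.-1)%N by rewrite -ltnS prednK // (leq_trans _ km).
  rewrite cl ?km ?(leq_trans k1) // cl ?k1 ?km1 //; last exact: leq_trans (leq_pred m) mn.
  rewrite (_ : k.+1.-1 = k) //.
  rewrite ler_pM2l //.
  have e1 : hm k.+1 <= hm m by apply: hm_mono; rewrite // km.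
  have e2 : hm k <= hm m by apply: hm_mono; rewrite // k1 (ltnW km).
  rewrite /hm in e1 e2; rewrite (_ : k.+1.-1 = k) // in e1.
  have h1 : c k <= c m.-1 by apply: c_le; rewrite km1 (leq_trans (leq_pred m) mN).
  have h2 : c k.-1 < c k by apply: c_lt; rewrite prednK // leqnn (leq_trans (ltnW km) mN).
  have h3 : c k < c k.+1 by apply: c_lt; rewrite leqnn (leq_trans km mN).
  apply: (@Sl_mono R g g0 g1); lra.
- move=> m k /andP[k1 km] mn.
  rewrite cl ?k1 ?km //; apply: mulr_ge0; first exact: ltW.
  apply: (@Sl_ge0 R g g0).
    by rewrite subr_ge0; apply: c_le; rewrite km (leq_trans mn nN).
  have : c k.-1 < c k by apply: c_lt; rewrite prednK // leqnn (leq_trans km (leq_trans mn nN)).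
  lra.
Qed.
End Glue.

Local Close Scope classical_set_scope.

Theorem lemma2p5 (R : realType) (T alpha : R) (N : nat) (t : nat -> R) :
  0 < T -> 0 < alpha < 1 -> (0 < N)%N ->
  t 0%N = 0 -> t N = T ->
  (forall n : nat, (1 <= n <= N)%N -> t n.-1 < t n) ->
  (forall n : nat, (2 <= n <= N)%N -> tau t n.-1 <= tau t n) ->
  forall n : nat, (1 <= n <= N)%N ->
  forall w : nat -> R,
    0 <= \sum_(1 <= k < n.+1)
           w k * \sum_(1 <= j < k.+1) pker t alpha k (k - j)%N * w j.
Proof.
move=> _ ha _ _ _ ht htau n hn w.
exact: (@main_pos R alpha N t ha ht htau n w hn).
Qed.
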